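(* Let $\mathbf{A}$ be the $6\times 3$ matrix with rows $(1,1,0),(1,1,0),(1,0,1),(1,0,1),(0,1,1),(0,1,1)$, and $\mathbf{B}$ the $6\times 8$ matrix with rows $(1,1,1,0,0,1,0,0)$, $(1,0,0,1,1,1,0,0)$, $(1,1,0,1,0,0,1,0)$, $(1,0,1,0,1,0,1,0)$, $(1,1,0,0,1,0,0,1)$, $(1,0,1,1,0,0,0,1)$. Let $\mathbf{L}$ be the $8\times 15$ matrix whose first six rows form the block $(\mathbf{A}\mid \mathbf{I}_6\mid \mathbf{I}_6)$, whose seventh row is all ones and whose eighth row is all zeros; let $\mathbf{R}$ be the $8\times 15$ matrix whose first six rows form $(\mathbf{B}\mid \mathbf{O}_{6\times 7})$, whose seventh row is all ones and whose eighth row is all zeros. Then $(\mathbf{L},\mathbf{R})$ is centered and $\mathbf{L}\preceq^{\mathrm{PC}}\mathbf{R}$, but $(\mathbf{L},\mathbf{R})$ admits no dominance map.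
   Context: $\mathbf{I}_6$ is the $6\times6$ identity matrix and $\mathbf{O}_{6\times7}$ the zero matrix. $\mathbf{A}_{(i)}$ is the $i$-th row; $e$ the all-ones row vector; $|v|=\sum_k|v_k|$; $\le$ between vectors is componentwise. A pair of $(0,1)$-matrices with the same number of rows, having a common all-zero row, is centered if $|\mathbf{L}_{(i)}|=|\mathbf{R}_{(i)}|$ for all $i$ and some row satisfies $\mathbf{L}_{(i)}=e=\mathbf{R}_{(i)}$. A dominance map is $f:\{0,1\}^{m}\to\{0,1\}^{m}$ ($m$ the common number of columns) with $|u|=|f(u)|$ and $\mathbf{L}u^T\le\mathbf{R}f(u)^T$ for all $u$. $\mathbf{L}\preceq^{\mathrm{PC}}\mathbf{R}$ means $v\mathbf{L}\preceq v\mathbf{R}$ for all $v\in\mathbb{R}_{\ge0}^{8}$, where for $x,y\in\mathbb{R}^d$, $x\preceq y$ means $\sum_{n=1}^k x^\downarrow_n\le\sum_{n=1}^k y^\downarrow_n$ for $k<d$ and equal total sums, $x^\downarrow_n$ being the $n$-th largest component. *)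

(* Defs.v *)
From HB Require Import structures.
From mathcomp Require Import all_boot all_order all_algebra.
From mathcomp Require Import reals.
Set Implicit Arguments. Unset Strict Implicit. Unset Printing Implicit Defensive.
Import Order.TTheory GRing.Theory Num.Theory.
Local Open Scope ring_scope.

Definition Aseq : seq (seq nat) :=
  [:: [:: 1; 1; 0]%N; [:: 1; 1; 0]%N; [:: 1; 0; 1]%N;
      [:: 1; 0; 1]%N; [:: 0; 1; 1]%N; [:: 0; 1; 1]%N].

Definition Bseq : seq (seq nat) :=
  [:: [:: 1; 1; 1; 0; 0; 1; 0; 0]%N;
      [:: 1; 0; 0; 1; 1; 1; 0; 0]%N;
      [:: 1; 1; 0; 1; 0; 0; 1; 0]%N;
      [:: 1; 0; 1; 0; 1; 0; 1; 0]%N;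
      [:: 1; 1; 0; 0; 1; 0; 0; 1]%N;
      [:: 1; 0; 1; 1; 0; 0; 0; 1]%N].

(* L: rows 0..5 = (A | I_6 | I_6), row 6 = all ones, row 7 = all zeros *)
Definition Lentry (i j : nat) : nat :=
  if (i < 6)%N then
    (if (j < 3)%N then nth 0%N (nth [::] Aseq i) j
     else if (j < 9)%N then nat_of_bool (i == j - 3)%N
     else nat_of_bool (i == j - 9)%N)
  else if i == 6%N then 1%N else 0%N.

Definition Rentry (i j : nat) : nat :=
  if (i < 6)%N then
    (if (j < 8)%N then nth 0%N (nth [::] Bseq i) j else 0%N)
  else if i == 6%N then 1%N else 0%N.

Definition Lmx (T : nzSemiRingType) : 'M[T]_(8, 15) :=
  \matrix_(i < 8, j < 15) (Lentry i j)%:R.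
Definition Rmx (T : nzSemiRingType) : 'M[T]_(8, 15) :=
  \matrix_(i < 8, j < 15) (Rentry i j)%:R.

Definition row01 {m n : nat} (M : 'M[nat]_(m, n)) : Prop :=
  forall i j, M i j = 0%N \/ M i j = 1%N.

Definition rowsum {m n : nat} (M : 'M[nat]_(m, n)) (i : 'I_m) : nat :=
  (\sum_(j < n) M i j)%N.

Definition centered {m n : nat} (L R : 'M[nat]_(m, n)) : Prop :=
  [/\ row01 L, row01 R,
      (exists i, forall j, L i j = 0%N /\ R i j = 0%N),
      (forall i, rowsum L i = rowsum R i) &
      (exists i, forall j, L i j = 1%N /\ R i j = 1%N)].

Definition bvec {n : nat} (u : {ffun 'I_n -> bool}) : 'cV[nat]_n :=
  \col_(j < n) nat_of_bool (u j).

Definition bnorm {n : nat} (u : {ffun 'I_n -> bool}) : nat :=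
  (\sum_(j < n) nat_of_bool (u j))%N.

Definition dominance_map {m n : nat} (L R : 'M[nat]_(m, n))
    (f : {ffun 'I_n -> bool} -> {ffun 'I_n -> bool}) : Prop :=
  forall u, bnorm u = bnorm (f u) /\
    (forall i, ((L *m bvec u) i ord0 <= (R *m bvec (f u)) i ord0)%N).

Definition has_dominance_map {m n : nat} (L R : 'M[nat]_(m, n)) : Prop :=
  exists f, dominance_map L R f.

Definition decr {R : realType} {d : nat} (x : 'rV[R]_d) : seq R :=
  sort (fun a b => b <= a) [seq x 0 j | j <- enum 'I_d].

Definition majorized {R : realType} {d : nat} (x y : 'rV[R]_d) : Prop :=
  (forall k : nat, (k < d)%N ->
     \sum_(n < k) nth 0 (decr x) n <= \sum_(n < k) nth 0 (decr y) n) /\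
  \sum_(j < d) x 0 j = \sum_(j < d) y 0 j.

Definition PC_le {R : realType} {m n : nat} (L M : 'M[R]_(m, n)) : Prop :=
  forall v : 'rV[R]_m, (forall i, 0 <= v 0 i) -> majorized (v *m L) (v *m M).

(* Main.v *)
Require Import Defs.
From HB Require Import structures.
From mathcomp Require Import all_boot all_order all_algebra.
From mathcomp Require Import reals.
Set Implicit Arguments. Unset Strict Implicit. Unset Printing Implicit Defensive.
Import Order.TTheory GRing.Theory Num.Theory.

Definition idx := iota 0 15.
Definition cvecP (E : nat -> nat -> nat) (P : nat -> bool) (i : nat) : nat :=
  sumn [seq (if P n then E i n else 0) | n <- idx].
Definition cvec E (b : seq bool) i := cvecP E (nth false b) i.
Definition kcount (b : seq bool) := count (nth false b) idx.

Fixpoint allbools (n : nat) : seq (seq bool) :=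
  if n is n'.+1 then [seq b :: s | b <- [:: true; false], s <- allbools n'] else [:: [::]].
Definition certs : seq (nat * seq (seq bool) * seq nat) := [::
  (0, [:: [:: false; false; false; false; false; false; false; false; false; false; false; false; false; false; false]], [:: 0; 0; 0; 0; 0; 0; 0; 0]);
  (1, [:: [:: true; false; false; false; false; false; false; false; false; false; false; false; false; false; false]], [:: 1; 1; 1; 1; 1; 1; 1; 0]);
  (2, [:: [:: true; true; false; false; false; false; false; false; false; false; false; false; false; false; false]], [:: 2; 1; 2; 1; 2; 1; 2; 0]);
  (2, [:: [:: true; false; true; false; false; false; false; false; false; false; false; false; false; false; false]], [:: 2; 1; 1; 2; 1; 2; 2; 0]);
  (2, [:: [:: true; false; false; true; false; false; false; false; false; false; false; false; false; false; false]], [:: 1; 2; 2; 1; 1; 2; 2; 0]);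
  (2, [:: [:: true; false; false; false; true; false; false; false; false; false; false; false; false; false; false]], [:: 1; 2; 1; 2; 2; 1; 2; 0]);
  (2, [:: [:: true; false; false; false; false; true; false; false; false; false; false; false; false; false; false]], [:: 2; 2; 1; 1; 1; 1; 2; 0]);
  (2, [:: [:: true; false; false; false; false; false; true; false; false; false; false; false; false; false; false]], [:: 1; 1; 2; 2; 1; 1; 2; 0]);
  (2, [:: [:: true; false; false; false; false; false; false; true; false; false; false; false; false; false; false]], [:: 1; 1; 1; 1; 2; 2; 2; 0]);
  (3, [:: [:: true; true; true; false; false; false; false; false; false; false; false; false; false; false; false]], [:: 3; 1; 2; 2; 2; 2; 3; 0]);
  (3, [:: [:: true; true; false; true; false; false; false; false; false; false; false; false; false; false; false]], [:: 2; 2; 3; 1; 2; 2; 3; 0]);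
  (3, [:: [:: true; true; false; false; true; false; false; false; false; false; false; false; false; false; false]], [:: 2; 2; 2; 2; 3; 1; 3; 0]);
  (3, [:: [:: true; true; false; false; false; true; false; false; false; false; false; false; false; false; false]], [:: 3; 2; 2; 1; 2; 1; 3; 0]);
  (3, [:: [:: true; true; false; false; false; false; true; false; false; false; false; false; false; false; false]], [:: 2; 1; 3; 2; 2; 1; 3; 0]);
  (3, [:: [:: true; true; false; false; false; false; false; true; false; false; false; false; false; false; false]], [:: 2; 1; 2; 1; 3; 2; 3; 0]);
  (3, [:: [:: true; false; true; true; false; false; false; false; false; false; false; false; false; false; false]], [:: 2; 2; 2; 2; 1; 3; 3; 0]);
  (3, [:: [:: true; false; true; false; true; false; false; false; false; false; false; false; false; false; false]], [:: 2; 2; 1; 3; 2; 2; 3; 0]);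
  (3, [:: [:: true; false; true; false; false; true; false; false; false; false; false; false; false; false; false]], [:: 3; 2; 1; 2; 1; 2; 3; 0]);
  (3, [:: [:: true; false; true; false; false; false; true; false; false; false; false; false; false; false; false]], [:: 2; 1; 2; 3; 1; 2; 3; 0]);
  (3, [:: [:: true; false; true; false; false; false; false; true; false; false; false; false; false; false; false]], [:: 2; 1; 1; 2; 2; 3; 3; 0]);
  (3, [:: [:: true; false; false; true; true; false; false; false; false; false; false; false; false; false; false]], [:: 1; 3; 2; 2; 2; 2; 3; 0]);
  (3, [:: [:: true; false; false; true; false; true; false; false; false; false; false; false; false; false; false]], [:: 2; 3; 2; 1; 1; 2; 3; 0]);
  (3, [:: [:: true; false; false; true; false; false; true; false; false; false; false; false; false; false; false]], [:: 1; 2; 3; 2; 1; 2; 3; 0]);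
  (3, [:: [:: true; false; false; true; false; false; false; true; false; false; false; false; false; false; false]], [:: 1; 2; 2; 1; 2; 3; 3; 0]);
  (3, [:: [:: true; false; false; false; true; true; false; false; false; false; false; false; false; false; false]], [:: 2; 3; 1; 2; 2; 1; 3; 0]);
  (3, [:: [:: true; false; false; false; true; false; true; false; false; false; false; false; false; false; false]], [:: 1; 2; 2; 3; 2; 1; 3; 0]);
  (3, [:: [:: true; false; false; false; true; false; false; true; false; false; false; false; false; false; false]], [:: 1; 2; 1; 2; 3; 2; 3; 0]);
  (3, [:: [:: true; true; true; false; false; false; false; false; false; false; false; false; false; false; false]; [:: true; false; false; true; true; false; false; false; false; false; false; false; false; false; false]], [:: 4; 4; 4; 4; 4; 4; 6; 0]);
  (4, [:: [:: true; true; true; true; false; false; false; false; false; false; false; false; false; false; false]], [:: 3; 2; 3; 2; 2; 3; 4; 0]);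
  (4, [:: [:: true; true; true; false; true; false; false; false; false; false; false; false; false; false; false]], [:: 3; 2; 2; 3; 3; 2; 4; 0]);
  (4, [:: [:: true; true; true; false; false; true; false; false; false; false; false; false; false; false; false]], [:: 4; 2; 2; 2; 2; 2; 4; 0]);
  (4, [:: [:: true; true; true; false; false; false; true; false; false; false; false; false; false; false; false]], [:: 3; 1; 3; 3; 2; 2; 4; 0]);
  (4, [:: [:: true; true; true; false; false; false; false; true; false; false; false; false; false; false; false]], [:: 3; 1; 2; 2; 3; 3; 4; 0]);
  (4, [:: [:: true; true; false; true; true; false; false; false; false; false; false; false; false; false; false]], [:: 2; 3; 3; 2; 3; 2; 4; 0]);
  (4, [:: [:: true; true; false; true; false; true; false; false; false; false; false; false; false; false; false]], [:: 3; 3; 3; 1; 2; 2; 4; 0]);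
  (4, [:: [:: true; true; false; true; false; false; true; false; false; false; false; false; false; false; false]], [:: 2; 2; 4; 2; 2; 2; 4; 0]);
  (4, [:: [:: true; true; false; true; false; false; false; true; false; false; false; false; false; false; false]], [:: 2; 2; 3; 1; 3; 3; 4; 0]);
  (4, [:: [:: true; true; false; false; true; true; false; false; false; false; false; false; false; false; false]], [:: 3; 3; 2; 2; 3; 1; 4; 0]);
  (4, [:: [:: true; true; false; false; true; false; true; false; false; false; false; false; false; false; false]], [:: 2; 2; 3; 3; 3; 1; 4; 0]);
  (4, [:: [:: true; true; false; false; true; false; false; true; false; false; false; false; false; false; false]], [:: 2; 2; 2; 2; 4; 2; 4; 0]);
  (4, [:: [:: true; false; true; true; true; false; false; false; false; false; false; false; false; false; false]], [:: 2; 3; 2; 3; 2; 3; 4; 0]);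
  (4, [:: [:: true; false; true; true; false; true; false; false; false; false; false; false; false; false; false]], [:: 3; 3; 2; 2; 1; 3; 4; 0]);
  (4, [:: [:: true; false; true; true; false; false; true; false; false; false; false; false; false; false; false]], [:: 2; 2; 3; 3; 1; 3; 4; 0]);
  (4, [:: [:: true; false; true; true; false; false; false; true; false; false; false; false; false; false; false]], [:: 2; 2; 2; 2; 2; 4; 4; 0]);
  (4, [:: [:: true; false; true; false; true; true; false; false; false; false; false; false; false; false; false]], [:: 3; 3; 1; 3; 2; 2; 4; 0]);
  (4, [:: [:: true; false; true; false; true; false; true; false; false; false; false; false; false; false; false]], [:: 2; 2; 2; 4; 2; 2; 4; 0]);
  (4, [:: [:: true; false; true; false; true; false; false; true; false; false; false; false; false; false; false]], [:: 2; 2; 1; 3; 3; 3; 4; 0]);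
  (4, [:: [:: true; false; false; true; true; true; false; false; false; false; false; false; false; false; false]], [:: 2; 4; 2; 2; 2; 2; 4; 0]);
  (4, [:: [:: true; false; false; true; true; false; true; false; false; false; false; false; false; false; false]], [:: 1; 3; 3; 3; 2; 2; 4; 0]);
  (4, [:: [:: true; false; false; true; true; false; false; true; false; false; false; false; false; false; false]], [:: 1; 3; 2; 2; 3; 3; 4; 0]);
  (5, [:: [:: true; true; true; true; true; false; false; false; false; false; false; false; false; false; false]], [:: 3; 3; 3; 3; 3; 3; 5; 0]);
  (5, [:: [:: true; true; true; true; false; true; false; false; false; false; false; false; false; false; false]], [:: 4; 3; 3; 2; 2; 3; 5; 0]);
  (5, [:: [:: true; true; true; true; false; false; true; false; false; false; false; false; false; false; false]], [:: 3; 2; 4; 3; 2; 3; 5; 0]);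
  (5, [:: [:: true; true; true; true; false; false; false; true; false; false; false; false; false; false; false]], [:: 3; 2; 3; 2; 3; 4; 5; 0]);
  (5, [:: [:: true; true; true; false; true; true; false; false; false; false; false; false; false; false; false]], [:: 4; 3; 2; 3; 3; 2; 5; 0]);
  (5, [:: [:: true; true; true; false; true; false; true; false; false; false; false; false; false; false; false]], [:: 3; 2; 3; 4; 3; 2; 5; 0]);
  (5, [:: [:: true; true; true; false; true; false; false; true; false; false; false; false; false; false; false]], [:: 3; 2; 2; 3; 4; 3; 5; 0]);
  (5, [:: [:: true; true; true; false; false; true; true; false; false; false; false; false; false; false; false]], [:: 4; 2; 3; 3; 2; 2; 5; 0]);
  (5, [:: [:: true; true; true; false; false; true; false; true; false; false; false; false; false; false; false]], [:: 4; 2; 2; 2; 3; 3; 5; 0]);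
  (5, [:: [:: true; true; false; true; true; true; false; false; false; false; false; false; false; false; false]], [:: 3; 4; 3; 2; 3; 2; 5; 0]);
  (5, [:: [:: true; true; false; true; true; false; true; false; false; false; false; false; false; false; false]], [:: 2; 3; 4; 3; 3; 2; 5; 0]);
  (5, [:: [:: true; true; false; true; true; false; false; true; false; false; false; false; false; false; false]], [:: 2; 3; 3; 2; 4; 3; 5; 0]);
  (5, [:: [:: true; true; false; true; false; true; true; false; false; false; false; false; false; false; false]], [:: 3; 3; 4; 2; 2; 2; 5; 0]);
  (5, [:: [:: true; true; false; true; false; false; true; true; false; false; false; false; false; false; false]], [:: 2; 2; 4; 2; 3; 3; 5; 0]);
  (5, [:: [:: true; true; false; false; true; true; false; true; false; false; false; false; false; false; false]], [:: 3; 3; 2; 2; 4; 2; 5; 0]);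
  (5, [:: [:: true; true; false; false; true; false; true; true; false; false; false; false; false; false; false]], [:: 2; 2; 3; 3; 4; 2; 5; 0]);
  (5, [:: [:: true; false; true; true; true; true; false; false; false; false; false; false; false; false; false]], [:: 3; 4; 2; 3; 2; 3; 5; 0]);
  (5, [:: [:: true; false; true; true; true; false; true; false; false; false; false; false; false; false; false]], [:: 2; 3; 3; 4; 2; 3; 5; 0]);
  (5, [:: [:: true; false; true; true; true; false; false; true; false; false; false; false; false; false; false]], [:: 2; 3; 2; 3; 3; 4; 5; 0]);
  (5, [:: [:: true; false; true; true; false; true; false; true; false; false; false; false; false; false; false]], [:: 3; 3; 2; 2; 2; 4; 5; 0]);
  (5, [:: [:: true; false; true; true; false; false; true; true; false; false; false; false; false; false; false]], [:: 2; 2; 3; 3; 2; 4; 5; 0]);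
  (5, [:: [:: true; false; true; false; true; true; true; false; false; false; false; false; false; false; false]], [:: 3; 3; 2; 4; 2; 2; 5; 0]);
  (5, [:: [:: true; false; true; false; true; false; true; true; false; false; false; false; false; false; false]], [:: 2; 2; 2; 4; 3; 3; 5; 0]);
  (5, [:: [:: true; false; false; true; true; true; true; false; false; false; false; false; false; false; false]], [:: 2; 4; 3; 3; 2; 2; 5; 0]);
  (5, [:: [:: true; false; false; true; true; true; false; true; false; false; false; false; false; false; false]], [:: 2; 4; 2; 2; 3; 3; 5; 0]);
  (6, [:: [:: true; true; true; true; true; true; false; false; false; false; false; false; false; false; false]], [:: 4; 4; 3; 3; 3; 3; 6; 0]);
  (6, [:: [:: true; true; true; true; true; false; true; false; false; false; false; false; false; false; false]], [:: 3; 3; 4; 4; 3; 3; 6; 0]);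
  (6, [:: [:: true; true; true; true; true; false; false; true; false; false; false; false; false; false; false]], [:: 3; 3; 3; 3; 4; 4; 6; 0]);
  (6, [:: [:: true; true; true; true; false; true; true; false; false; false; false; false; false; false; false]], [:: 4; 3; 4; 3; 2; 3; 6; 0]);
  (6, [:: [:: true; true; true; true; false; true; false; true; false; false; false; false; false; false; false]], [:: 4; 3; 3; 2; 3; 4; 6; 0]);
  (6, [:: [:: true; true; true; true; false; false; true; true; false; false; false; false; false; false; false]], [:: 3; 2; 4; 3; 3; 4; 6; 0]);
  (6, [:: [:: true; true; true; false; true; true; true; false; false; false; false; false; false; false; false]], [:: 4; 3; 3; 4; 3; 2; 6; 0]);
  (6, [:: [:: true; true; true; false; true; true; false; true; false; false; false; false; false; false; false]], [:: 4; 3; 2; 3; 4; 3; 6; 0]);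
  (6, [:: [:: true; true; true; false; true; false; true; true; false; false; false; false; false; false; false]], [:: 3; 2; 3; 4; 4; 3; 6; 0]);
  (6, [:: [:: true; true; false; true; true; true; true; false; false; false; false; false; false; false; false]], [:: 3; 4; 4; 3; 3; 2; 6; 0]);
  (6, [:: [:: true; true; false; true; true; true; false; true; false; false; false; false; false; false; false]], [:: 3; 4; 3; 2; 4; 3; 6; 0]);
  (6, [:: [:: true; true; false; true; true; false; true; true; false; false; false; false; false; false; false]], [:: 2; 3; 4; 3; 4; 3; 6; 0]);
  (6, [:: [:: true; false; true; true; true; true; true; false; false; false; false; false; false; false; false]], [:: 3; 4; 3; 4; 2; 3; 6; 0]);
  (6, [:: [:: true; false; true; true; true; true; false; true; false; false; false; false; false; false; false]], [:: 3; 4; 2; 3; 3; 4; 6; 0]);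
  (6, [:: [:: true; false; true; true; true; false; true; true; false; false; false; false; false; false; false]], [:: 2; 3; 3; 4; 3; 4; 6; 0]);
  (7, [:: [:: true; true; true; true; true; true; true; false; false; false; false; false; false; false; false]], [:: 4; 4; 4; 4; 3; 3; 7; 0]);
  (7, [:: [:: true; true; true; true; true; true; false; true; false; false; false; false; false; false; false]], [:: 4; 4; 3; 3; 4; 4; 7; 0]);
  (7, [:: [:: true; true; true; true; true; false; true; true; false; false; false; false; false; false; false]], [:: 3; 3; 4; 4; 4; 4; 7; 0]);
  (7, [:: [:: true; true; true; true; false; true; true; true; false; false; false; false; false; false; false]], [:: 4; 3; 4; 3; 3; 4; 7; 0]);
  (7, [:: [:: true; true; true; false; true; true; true; true; false; false; false; false; false; false; false]], [:: 4; 3; 3; 4; 4; 3; 7; 0]);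
  (7, [:: [:: true; true; false; true; true; true; true; true; false; false; false; false; false; false; false]], [:: 3; 4; 4; 3; 4; 3; 7; 0]);
  (7, [:: [:: true; false; true; true; true; true; true; true; false; false; false; false; false; false; false]], [:: 3; 4; 3; 4; 3; 4; 7; 0]);
  (8, [:: [:: true; true; true; true; true; true; true; true; false; false; false; false; false; false; false]], [:: 4; 4; 4; 4; 4; 4; 8; 0]);
  (9, [:: [:: true; true; true; true; true; true; true; true; true; false; false; false; false; false; false]], [:: 4; 4; 4; 4; 4; 4; 9; 0]);
  (10, [:: [:: true; true; true; true; true; true; true; true; true; true; false; false; false; false; false]], [:: 4; 4; 4; 4; 4; 4; 10; 0]);
  (11, [:: [:: true; true; true; true; true; true; true; true; true; true; true; false; false; false; false]], [:: 4; 4; 4; 4; 4; 4; 11; 0]);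
  (12, [:: [:: true; true; true; true; true; true; true; true; true; true; true; true; false; false; false]], [:: 4; 4; 4; 4; 4; 4; 12; 0]);
  (13, [:: [:: true; true; true; true; true; true; true; true; true; true; true; true; true; false; false]], [:: 4; 4; 4; 4; 4; 4; 13; 0]);
  (14, [:: [:: true; true; true; true; true; true; true; true; true; true; true; true; true; true; false]], [:: 4; 4; 4; 4; 4; 4; 14; 0]);
  (15, [:: [:: true; true; true; true; true; true; true; true; true; true; true; true; true; true; true]], [:: 4; 4; 4; 4; 4; 4; 15; 0])].
Definition mkD (Js : seq (seq bool)) :=
  [seq sumn [seq cvec Rentry J i | J <- Js] | i <- iota 0 8].
Definition cert_valid (c : nat * seq (seq bool) * seq nat) :=
  let: (k, Js, D) := c in
  [&& 0 < size Js, all (fun J => kcount J == k) Js & D == mkD Js].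
Definition cert_test kb (cb : seq nat) (c : nat * seq (seq bool) * seq nat) :=
  let: (k, Js, D) := c in
  (kb == k) && all (fun i => size Js * nth 0 cb i <= nth 0 D i) (iota 0 8).
Definition check_b b :=
  let kb := kcount b in let cb := [seq cvec Lentry b i | i <- iota 0 8] in
  has (cert_test kb cb) certs.
Lemma certs_valid : all cert_valid certs.
Proof. vm_compute. reflexivity. Qed.
Lemma check_all : all check_b (allbools 15).
Proof. vm_compute. reflexivity. Qed.
Definition bu := [seq n < 3 | n <- idx].
Lemma nodom_all : all (fun b => ~~ ((kcount b == 3) && all (fun i => cvec Lentry bu i <= cvec Rentry b i) (iota 0 8))) (allbools 15).
Proof. vm_compute. reflexivity. Qed.

Local Open Scope ring_scope.

Lemma allboolsP n b : size b = n -> b \in allbools n.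
Proof.
elim: n b => [|n IH] [|x b] //.
move=> [/IH Hb]; change (x :: b \in [seq y :: s | y <- [:: true; false], s <- allbools n]); apply: allpairs_f => //; by case: x.
Qed.

Section Topk.
Variable R : realType.

Lemma topk_sorted (t u : seq R) k : sorted (fun a b => b <= a) t -> perm_eq u t ->
  \sum_(x <- take k u) x <= \sum_(x <- take k t) x.
Proof.
elim: t u k => [|a t IH] u k.
  by move=> _ /perm_nilP ->.
move=> /= Hp Hu.
have trans : transitive (fun a b : R => b <= a) by move=> x y z H1 H2; exact: le_trans H2 H1.
move: Hp; rewrite (path_sortedE trans) => /andP[Hall Hs].
have Hau : a \in u by rewrite (perm_mem Hu) mem_head.
move: Hu; case/splitPr: Hau => u1 u2 Hu.
have Hp' : perm_eq (u1 ++ u2) t.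
  rewrite -(perm_cons a); apply: perm_trans _ Hu.
  rewrite -[a :: u1 ++ u2]cat1s perm_catCA; exact: perm_refl.
case: k => [|k]; first by rewrite !take0.
rewrite [take k.+1 (a :: t)]/= big_cons.
case: (leqP (size u1) k) => Hk.
  rewrite take_cat ltnNge (leq_trans Hk (leqnSn _)) /= subSn //= .
  have := IH _ k Hs Hp'.
  rewrite take_cat ltnNge Hk /= big_cat /= big_cat big_cons /=.
  move=> H. rewrite addrCA lerD2l. done.
rewrite takel_cat // -(takel_cat u2 Hk).
have Hsz : (k < size t)%N by rewrite -(perm_size Hp') size_cat (leq_trans Hk) // leq_addr.
apply: le_trans (IH _ k.+1 Hs Hp') _.
rewrite (take_nth 0 Hsz) -cats1 big_cat /= big_seq1 addrC lerD2r.
by apply: (allP Hall); rewrite mem_nth.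
Qed.

Lemma sum_nth_take (s : seq R) k : (k <= size s)%N ->
  \sum_(n < k) nth 0 s n = \sum_(x <- take k s) x.
Proof.
move=> Hk; rewrite (big_nth 0) size_takel // big_mkord.
by apply: eq_bigr => i _; rewrite nth_take.
Qed.
End Topk.

Local Open Scope ring_scope.

Section Real.
Variable R : realType.
Variable v : 'rV[R]_8.
Hypothesis v0 : forall i, 0 <= v 0 i.

Definition FF (E : nat -> nat -> nat) (n : nat) : R := \sum_(i < 8) v 0 i * (E i n)%:R.

Lemma lin_sum E (P : pred nat) :
  \sum_(n <- idx | P n) FF E n = \sum_(i < 8) v 0 i * (cvecP E P i)%:R.
Proof.
rewrite /FF exchange_big /=; apply: eq_bigr => i _.
rewrite -mulr_sumr; congr (_ * _).
by rewrite /cvecP sumnE big_map natr_sum big_mkcond /=; apply: eq_bigr => n _; case: (P n).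
Qed.

Lemma row_FF (E : nat -> nat -> nat) :
  [seq (v *m (\matrix_(i < 8, j < 15) (E i j)%:R : 'M[R]_(8,15))) 0 j | j <- enum 'I_15]
  = map (FF E) idx.
Proof.
rewrite /idx -val_enum_ord -map_comp; apply: eq_map => j /=.
rewrite mxE /FF; apply: eq_bigr => i _; by rewrite mxE.
Qed.

Definition ge_rel := fun a b : R => b <= a.

Lemma Y_bound J k : kcount J = k ->
  \sum_(i < 8) v 0 i * (cvec Rentry J i)%:R <=
  \sum_(x <- take k (sort ge_rel (map (FF Rentry) idx))) x.
Proof.
move=> HJ; rewrite /cvec -lin_sum -big_filter.
set P := nth false J.
have -> : \sum_(n <- [seq n <- idx | P n]) FF Rentry n =
          \sum_(x <- take k (map (FF Rentry) ([seq n <- idx | P n] ++ [seq n <- idx | predC P n]))) x.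
  rewrite map_cat take_size_cat ?big_map // size_map size_filter //.
apply: topk_sorted.
  by apply: sort_sorted => a b; exact: le_total.
rewrite perm_sym perm_sort; apply: perm_map.
by rewrite perm_sym perm_filterC.
Qed.

End Real.

Local Open Scope ring_scope.

Section Real2.
Variable R : realType.
Variable v : 'rV[R]_8.
Hypothesis v0 : forall i, 0 <= v 0 i.

Lemma X_top k : (k <= 15)%N -> exists b, [/\ size b = 15%N, kcount b = k &
  \sum_(x <- take k (sort (@ge_rel R) (map (FF v Lentry) idx))) x =
  \sum_(i < 8) v 0 i * (cvec Lentry b i)%:R].
Proof.
move=> Hk.
have Hp : perm_eq (sort (@ge_rel R) (map (FF v Lentry) idx)) (map (FF v Lentry) idx).
  by rewrite perm_sort.
have /(perm_iotaP 0) [Is HIs Hs] := Hp.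
rewrite size_map /idx size_iota in HIs.
set l := take k Is.
have Hl : forall n, n \in l -> (n < 15)%N.
  by move=> n /mem_take; rewrite (perm_mem HIs) mem_iota.
have Hul : uniq l by rewrite take_uniq // (perm_uniq HIs) iota_uniq.
have Hsl : size l = k by rewrite size_takel // (perm_size HIs) size_iota.
have Hperm : perm_eq l [seq n <- idx | n \in l].
  apply: uniq_perm => //; first by rewrite filter_uniq // iota_uniq.
  by move=> n; rewrite mem_filter /idx mem_iota /=; case: (boolP (n \in l)) => // /Hl ->.
exists [seq n \in l | n <- idx]; split.
- by rewrite size_map size_iota.
- rewrite /kcount -Hsl (perm_size Hperm) size_filter.
  apply: eq_in_count => n; rewrite /idx mem_iota add0n => Hn.
  by rewrite (nth_map 0) ?size_iota // nth_iota.
rewrite Hs -map_take big_map.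
have -> : \sum_(i <- l) nth 0 [seq FF v Lentry i | i <- idx] i = \sum_(i <- l) FF v Lentry i.
  rewrite big_seq_cond [RHS]big_seq_cond; apply: eq_bigr => n /andP[/Hl Hn _].
  by rewrite (nth_map 0) ?size_iota // nth_iota.
rewrite (perm_big _ Hperm) big_filter lin_sum; apply: eq_bigr => i _.
congr (_ * _%:R); rewrite /cvec /cvecP; congr sumn; apply: eq_in_map => n.
Qed.

Lemma check_sound b : size b = 15%N ->
  \sum_(i < 8) v 0 i * (cvec Lentry b i)%:R <=
  \sum_(x <- take (kcount b) (sort (@ge_rel R) (map (FF v Rentry) idx))) x.
Proof.
move=> Hb.
have := allP check_all b (allboolsP Hb).
rewrite /check_b => /hasP [[[k Js] D] Hc].
have := allP certs_valid _ Hc.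
rewrite /cert_valid /cert_test => /and3P[HW /allP HJs /eqP HD] /andP[/eqP Hk /allP Hle].
set T := \sum_(x <- _) x.
set W := size Js.
have HW' : 0 < (W%:R : R) by rewrite ltr0n.
rewrite -(ler_pM2l HW') mulr_sumr.
apply: le_trans (_ : \sum_(i < 8) v 0 i * (nth 0 D i)%:R <= _).
  apply: ler_sum => i _.
  rewrite mulrCA -natrM ler_wpM2l // ler_nat.
  have := Hle i; rewrite mem_iota leq0n add0n ltn_ord => /(_ isT).
  by rewrite (nth_map 0) ?size_iota // nth_iota.
have -> : \sum_(i < 8) v 0 i * (nth 0 D i)%:R =
          \sum_(J <- Js) \sum_(i < 8) v 0 i * (cvec Rentry J i)%:R.
  rewrite exchange_big /=; apply: eq_bigr => i _.
  rewrite HD /mkD (nth_map 0) ?size_iota // nth_iota // add0n.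
  by rewrite sumnE big_map natr_sum mulr_sumr.
rewrite -/W.
have : \sum_(J <- Js) \sum_(i < 8) v 0 i * (cvec Rentry J i)%:R <= \sum_(J <- Js) T.
  rewrite big_seq_cond [X in _ <= X]big_seq_cond; apply: ler_sum => J /andP[HJ _].
  rewrite /T Hk; apply: Y_bound; exact/eqP/HJs.
move/le_trans; apply.
rewrite /W; have -> : forall s : seq (seq bool), \sum_(J <- s) T = (size s)%:R * T.
  elim => [|J s IH]; first by rewrite big_nil mul0r.
  by rewrite big_cons IH /= -[(size s).+1]addn1 natrD mulrDl mul1r addrC.
by [].
Qed.
End Real2.

Local Open Scope ring_scope.

Lemma sum_ord_idx (V : nmodType) (F : nat -> V) : \sum_(j < 15) F j = \sum_(n <- idx) F n.
Proof. by rewrite -(big_mkord xpredT). Qed.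

Lemma all2P (P : nat -> nat -> bool) m n :
  all (fun i => all (P i) (iota 0 m)) (iota 0 n) -> forall (i : 'I_n) (j : 'I_m), P i j.
Proof.
move=> /allP H i j.
have Hi : (i : nat) \in iota 0 n by rewrite mem_iota leq0n add0n ltn_ord.
have /allP H2 := H _ Hi.
by apply: H2; rewrite mem_iota leq0n add0n ltn_ord.
Qed.

Lemma allP1 (P : nat -> bool) n : all P (iota 0 n) -> forall (i : 'I_n), P i.
Proof. by move=> /allP H i; apply: H; rewrite mem_iota leq0n add0n ltn_ord. Qed.

Lemma Lnat i j : Lmx nat i j = Lentry i j. Proof. by rewrite /Lmx mxE natn. Qed.
Lemma Rnat i j : Rmx nat i j = Rentry i j. Proof. by rewrite /Rmx mxE natn. Qed.

Lemma rowsum_cvec (E : nat -> nat -> nat) (M : 'M[nat]_(8, 15)) i :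
  (forall i j, M i j = E i j) -> rowsum M i = cvecP E xpredT i.
Proof.
move=> HM; rewrite /rowsum /cvecP sumnE big_map.
rewrite (eq_bigr (fun j : 'I_15 => E i j)) ?sum_ord_idx //.
Qed.

Lemma mulbvec (E : nat -> nat -> nat) (M : 'M[nat]_(8, 15)) (g : {ffun 'I_15 -> bool}) i :
  (forall i j, M i j = E i j) ->
  (M *m bvec g) i ord0 = cvec E [seq g j | j <- enum 'I_15] i.
Proof.
move=> HM; rewrite mxE /cvec /cvecP sumnE big_map -sum_ord_idx.
apply: eq_bigr => j _; rewrite HM /bvec mxE (nth_map j) ?size_enum_ord // nth_ord_enum.
by case: (g j) => /=; rewrite ?mulr1 ?mulr0.
Qed.

Lemma bnorm_k (g : {ffun 'I_15 -> bool}) : bnorm g = kcount [seq g j | j <- enum 'I_15].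
Proof.
rewrite /bnorm /kcount -sumn_count sumnE big_map -sum_ord_idx.
by apply: eq_bigr => j _; rewrite (nth_map j) ?size_enum_ord // nth_ord_enum.
Qed.

Lemma cv_eq : all (fun i => cvecP Lentry xpredT i == cvecP Rentry xpredT i) (iota 0 8).
Proof. vm_compute. reflexivity. Qed.

Theorem mainTheorem9 :
  centered (Lmx nat) (Rmx nat) /\
  (forall R : realType, PC_le (Lmx R) (Rmx R)) /\
  ~ has_dominance_map (Lmx nat) (Rmx nat).
Proof.
split; [|split].
- split.
  + move=> i j; rewrite Lnat.
    have H : all (fun i => all (fun j => (Lentry i j == 0%N) || (Lentry i j == 1%N)) (iota 0 15)) (iota 0 8) by vm_compute.
    by case/orP: (all2P H i j) => /eqP ->; [left|right].
  + move=> i j; rewrite Rnat.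
    have H : all (fun i => all (fun j => (Rentry i j == 0%N) || (Rentry i j == 1%N)) (iota 0 15)) (iota 0 8) by vm_compute.
    by case/orP: (all2P H i j) => /eqP ->; [left|right].
  + by exists (inord 7) => j; rewrite Lnat Rnat inordK.
  + move=> i; rewrite (rowsum_cvec _ Lnat) (rowsum_cvec _ Rnat).
    by apply/eqP; apply: (allP1 cv_eq).
  + by exists (inord 6) => j; rewrite Lnat Rnat inordK.
- move=> R v Hv; rewrite /majorized /decr /Lmx /Rmx (row_FF v Lentry) (row_FF v Rentry).
  split.
    move=> k Hk.
    rewrite !sum_nth_take ?size_sort ?size_map ?size_iota ?(ltnW Hk) //.
    have [b [Hb Hkb ->]] := X_top v (ltnW Hk).
    rewrite -Hkb; exact: check_sound.
  have Hs (E : nat -> nat -> nat) : \sum_(j < 15) (v *m (\matrix_(i < 8, j < 15) (E i j)%:R : 'M[R]_(8,15))) 0 j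
      = \sum_(i < 8) v 0 i * (cvecP E xpredT i)%:R.
    rewrite (eq_bigr (fun j : 'I_15 => FF v E j)); first by rewrite sum_ord_idx (lin_sum v E xpredT).
    by move=> j _; rewrite mxE; apply: eq_bigr => i _; rewrite mxE.
  rewrite (Hs Lentry) (Hs Rentry); apply: eq_bigr => i _.
  by rewrite (eqP (allP1 cv_eq i)).
- case=> f Hf.
  pose u : {ffun 'I_15 -> bool} := [ffun j : 'I_15 => (j < 3)%N].
  have [Hn Hle] := Hf u.
  have Hu : [seq u j | j <- enum 'I_15] = bu.
    rewrite /bu /idx -val_enum_ord -map_comp; apply: eq_map => j; by rewrite ffunE.
  set bw := [seq f u j | j <- enum 'I_15].
  have Hbw : bw \in allbools 15 by apply: allboolsP; rewrite size_map size_enum_ord.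
  have := allP nodom_all bw Hbw; rewrite negb_and => /orP[].
    by rewrite -bnorm_k -Hn bnorm_k Hu.
  move=> /negP; apply; apply/allP => i; rewrite mem_iota leq0n add0n => Hi.
  have := Hle (Ordinal Hi); rewrite (mulbvec _ _ Lnat) (mulbvec _ _ Rnat) Hu //.
Qed.
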